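(* Let $S$ be an idempotent semiring. The following are equivalent: (1) $\mathcal{R}^{\bullet}$ is the least distributive lattice congruence on $S$; (2) $\mathcal{D}^{+}\subseteq\mathcal{R}^{\bullet}$ and $S$ satisfies $x+yx+x\approx x$; (3) $S$ satisfies $x+xyx+x\approx x$ and $\mathcal{L}^{\bullet}\subseteq\mathcal{D}^{+}\subseteq\mathcal{R}^{\bullet}$; (4) $\leq^{r}_{\cdot}\ \subseteq\ \leq_{+}$ on $S$; (5) $S$ satisfies the identity $x\approx yx+x+yx$; (6) $S$ satisfies the identity $x\approx (y+x+y)x$.
   Context: An idempotent semiring is an algebra $(S,+,\cdot)$ with two binary operations such that $(S,+)$ and $(S,\cdot)$ are bands (associative, with $x+x=x$ and $xx=x$), and both distributive laws $x(y+z)=xy+xz$ and $(x+y)z=xz+yz$ hold; addition is not assumed commutative. A distributive lattice congruence on $S$ is a congruence $\rho$ such that $S/\rho$ satisfies $x+y\approx y+x$, $xy\approx yx$ and $x+xy\approx x$. Green's relations: $a\,\mathcal{L}^{\bullet}\,b$ iff $ab=a$ and $ba=b$; $a\,\mathcal{R}^{\bullet}\,b$ iff $ab=b$ and $ba=a$; $a\,\mathcal{D}^{+}\,b$ iff $a+b+a=a$ and $b+a+b=b$. Orders: $a\leq^{r}_{\cdot} b$ iff $a=ab$; $a\leq_{+} b$ iff $b=a+b$ and $b=b+a$. *)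

(* Defs.v *)
Section Defs.
Context {S : Type} (add mul : S -> S -> S).

(* (S,+) and (S,.) are bands; both distributive laws hold.
   Addition is NOT assumed commutative. *)
Record idem_semiring : Prop := {
  add_assoc : forall x y z, add x (add y z) = add (add x y) z;
  add_idem  : forall x, add x x = x;
  mul_assoc : forall x y z, mul x (mul y z) = mul (mul x y) z;
  mul_idem  : forall x, mul x x = x;
  mul_add_l : forall x y z, mul x (add y z) = add (mul x y) (mul x z);
  mul_add_r : forall x y z, mul (add x y) z = add (mul x z) (mul y z)
}.

Definition rel_incl (R R' : S -> S -> Prop) : Prop :=
  forall a b, R a b -> R' a b.

Definition congruence (rho : S -> S -> Prop) : Prop :=
  (forall a, rho a a) /\
  (forall a b, rho a b -> rho b a) /\
  (forall a b c, rho a b -> rho b c -> rho a c) /\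
  (forall a b c d, rho a b -> rho c d -> rho (add a c) (add b d)) /\
  (forall a b c d, rho a b -> rho c d -> rho (mul a c) (mul b d)).

Definition dl_congruence (rho : S -> S -> Prop) : Prop :=
  congruence rho /\
  (forall x y, rho (add x y) (add y x)) /\
  (forall x y, rho (mul x y) (mul y x)) /\
  (forall x y, rho (add x (mul x y)) x).

Definition least_dl_congruence (rho : S -> S -> Prop) : Prop :=
  dl_congruence rho /\
  forall sigma, dl_congruence sigma -> rel_incl rho sigma.

Definition Lmul (a b : S) : Prop := mul a b = a /\ mul b a = b.
Definition Rmul (a b : S) : Prop := mul a b = b /\ mul b a = a.
Definition Dadd (a b : S) : Prop := add (add a b) a = a /\ add (add b a) b = b.

Definition le_r_mul (a b : S) : Prop := a = mul a b.
Definition le_add (a b : S) : Prop := b = add a b /\ b = add b a.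

End Defs.

(* Main.v *)
Require Import Defs.
From Stdlib Require Import Setoid.

Section H.
Context {S : Type} (add mul : S -> S -> S) (HS : idem_semiring add mul).
Local Infix "+" := add.
Local Infix "*" := mul.

Let aA := add_assoc _ _ HS.
Let aI := add_idem _ _ HS.
Let mA := mul_assoc _ _ HS.
Let mI := mul_idem _ _ HS.
Let dL := mul_add_l _ _ HS.
Let dR := mul_add_r _ _ HS.

Definition Q5 := forall x y : S, x = y*x + x + y*x.

Lemma q5_q4 : Q5 -> rel_incl (le_r_mul mul) (le_add add).
Proof.
  intros h a b hab. unfold le_r_mul in hab.
  pose proof (h b a) as e. rewrite <- hab in e.
  split.
  - symmetry. rewrite e at 1. rewrite !aA, aI. symmetry; exact e.
  - symmetry. rewrite e at 1. rewrite <- !aA, aI. rewrite aA. symmetry; exact e.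
Qed.

Lemma q4_F2 : rel_incl (le_r_mul mul) (le_add add) ->
  forall x y, x = y*x + x /\ x = x + y*x.
Proof.
  intros h x y. apply h. unfold le_r_mul. rewrite <- mA, mI. reflexivity.
Qed.

Lemma q4_F1 : rel_incl (le_r_mul mul) (le_add add) ->
  forall x y, x*y*x = y*x.
Proof.
  intros h x y.
  assert (e1 : x*y*x = x*y*x*(y*x)).
  { rewrite !mA. rewrite <- (mA (x*y) x y). rewrite mI. reflexivity. }
  assert (e2 : y*x = y*x*(x*y*x)).
  { rewrite !mA. rewrite <- (mA y x x), mI. rewrite <- (mA (y*x) y x).
    rewrite <- (mA y x (y*x)). rewrite mA. rewrite mI. reflexivity. }
  destruct (h _ _ e1) as [_ f1].
  destruct (h _ _ e2) as [f2 _].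
  rewrite f2. symmetry. exact f1.
Qed.

Lemma q4_q5 : rel_incl (le_r_mul mul) (le_add add) -> Q5.
Proof.
  intros h x y. destruct (q4_F2 h x y) as [f1 f2].
  rewrite <- f1. exact f2.
Qed.

Lemma q5_dl : Q5 -> dl_congruence add mul (Rmul mul).
Proof.
  intros h.
  pose proof (q5_q4 h) as h4.
  pose proof (q4_F1 h4) as F1.
  pose proof (q4_F2 h4) as F2.
  unfold Rmul.
  split; [|split; [|split]].
  - split; [|split; [|split; [|split]]].
    + intros a; split; apply mI.
    + intros a b [e1 e2]; split; assumption.
    + intros a b c [e1 e2] [e3 e4]; split.
      * rewrite <- e3, mA, e1. reflexivity.
      * rewrite <- e2, mA, e4. reflexivity.
    + intros a b c d [e1 e2] [e3 e4]; split.
      * rewrite dL, !dR, e1, e3, <- (proj2 (F2 b c)), <- (proj1 (F2 d a)).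
        reflexivity.
      * rewrite dL, !dR, e2, e4, <- (proj2 (F2 a d)), <- (proj1 (F2 c b)).
        reflexivity.
    + intros a b c d [e1 e2] [e3 e4]; split.
      * rewrite <- e3 at 1. rewrite !mA.
        replace (a*c*b*c) with (a*(c*b*c)) by (rewrite !mA; reflexivity).
        rewrite F1, mA, e1, <- mA, e3. reflexivity.
      * rewrite <- e4 at 1. rewrite !mA.
        replace (b*d*a*d) with (b*(d*a*d)) by (rewrite !mA; reflexivity).
        rewrite F1, mA, e2, <- mA, e4. reflexivity.
  - intros x y; split.
    + rewrite dL, !dR, mI, mI. rewrite aA. rewrite <- (proj1 (F2 y x)).
      rewrite <- aA. rewrite <- (proj2 (F2 x y)). reflexivity.
    + rewrite dL, !dR, mI, mI. rewrite aA. rewrite <- (proj1 (F2 x y)).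
      rewrite <- aA. rewrite <- (proj2 (F2 y x)). reflexivity.
  - intros x y; split.
    + rewrite <- mA, (mA y y), mI, mA. apply F1.
    + rewrite <- mA, (mA x x), mI, mA. apply F1.
  - intros x y; split.
    + rewrite dR, F1, mI. symmetry. apply (proj2 (F2 x y)).
    + rewrite dL, mI, mA, mI. reflexivity.
Qed.

Lemma dl_q5 : dl_congruence add mul (Rmul mul) -> Q5.
Proof.
  intros [C [hc [hm ha]]] x y.
  assert (F1 : x*y*x = y*x).
  { destruct (hm x y) as [e1 e2]. rewrite <- mA, (mA y y), mI, mA in e1. exact e1. }
  assert (e : x + y*x = x).
  { destruct (ha x y) as [e1 e2]. rewrite dR, F1, mI in e1. exact e1. }
  assert (e' : y*x + x = x).
  { destruct (hc x (y*x)) as [e1 e2]. rewrite e in e1, e2.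
    rewrite dR, <- mA, !mI in e2. exact e2. }
  rewrite e'. symmetry; exact e.
Qed.

Lemma least_R : forall sigma, dl_congruence add mul sigma -> rel_incl (Rmul mul) sigma.
Proof.
  intros sigma [C [hc [hm ha]]] a b [e1 e2].
  pose proof (hm b a) as h. rewrite e1, e2 in h. exact h.
Qed.

Lemma q1_q5 : least_dl_congruence add mul (Rmul mul) <-> Q5.
Proof.
  split.
  - intros [h _]. apply dl_q5, h.
  - intros h. split. apply q5_dl, h. apply least_R.
Qed.

Lemma dl_D : dl_congruence add mul (Rmul mul) -> rel_incl (Dadd add) (Rmul mul).
Proof.
  intros [[rf [sy [tr [cadd cmul]]]] [hc [hm ha]]] a b [e1 e2].
  assert (r1 : Rmul mul a (a + b)).
  { rewrite <- e1 at 1. eapply tr. apply hc. rewrite aA, aI. apply rf. }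
  assert (r2 : Rmul mul b (a + b)).
  { rewrite <- e2 at 1. eapply tr. apply hc. rewrite aA, aI. apply hc. }
  eapply tr. exact r1. apply sy, r2.
Qed.

Lemma q2_q5 : (rel_incl (Dadd add) (Rmul mul) /\ (forall x y : S, x + y*x + x = x)) -> Q5.
Proof.
  intros [hd hx] x y.
  assert (d1 : Dadd add x (x + y*x)).
  { split.
    - rewrite aA, (aI x). apply hx.
    - rewrite !aA, hx, (aI x). reflexivity. }
  assert (d2 : Dadd add (y*x + x) x).
  { split.
    - rewrite <- (aA (y*x) x x), (aI x), (aI (y*x+x)). reflexivity.
    - rewrite aA, <- (aA (x+y*x) x x), (aI x). apply hx. }
  destruct (hd _ _ d1) as [_ f1]. rewrite dR, <- mA, !mI in f1.
  destruct (hd _ _ d2) as [f2 _]. rewrite dR, <- mA, !mI in f2.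
  rewrite f2. symmetry; exact f1.
Qed.

Lemma q5_q2 : Q5 -> (rel_incl (Dadd add) (Rmul mul) /\ (forall x y : S, x + y*x + x = x)).
Proof.
  intros h. split.
  - apply dl_D, q5_dl, h.
  - intros x y. destruct (q4_F2 (q5_q4 h) x y) as [f1 f2].
    rewrite <- f2. apply aI.
Qed.

Lemma q3_q5 : ((forall x y : S, x + x*y*x + x = x) /\
            rel_incl (Lmul mul) (Dadd add) /\ rel_incl (Dadd add) (Rmul mul)) -> Q5.
Proof.
  intros [hx [hl hd]].
  assert (F1 : forall x y, x*y*x = y*x).
  { intros x y.
    assert (l : Lmul mul (y*x) (x*y*x)).
    { split.
      - replace (y*x*(x*y*x)) with ((y*(x*x))*y*x) by (rewrite !mA; reflexivity).
        rewrite mI. replace (y*x*y*x) with ((y*x)*(y*x)) by (rewrite !mA; reflexivity).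
        apply mI.
      - replace (x*y*x*(y*x)) with (x*((y*x)*(y*x))) by (rewrite !mA; reflexivity).
        rewrite mI, mA. reflexivity. }
    destruct (hd _ _ (hl _ _ l)) as [e _]. rewrite <- e. destruct l as [l _]. exact l. }
  apply q2_q5. split. exact hd. intros x y. rewrite <- F1. apply hx.
Qed.

Lemma q5_q3 : Q5 -> ((forall x y : S, x + x*y*x + x = x) /\
            rel_incl (Lmul mul) (Dadd add) /\ rel_incl (Dadd add) (Rmul mul)).
Proof.
  intros h. pose proof (q4_F1 (q5_q4 h)) as F1.
  destruct (q5_q2 h) as [hd hx].
  split; [|split].
  - intros x y. rewrite F1. apply hx.
  - intros a b [e1 e2].
    assert (ab : a = b).
    { transitivity (a*(b*a)). rewrite e2; symmetry; exact e1. rewrite mA, F1. exact e2. }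
    subst b. split; rewrite !aI; reflexivity.
  - exact hd.
Qed.

Lemma q6_q5 : (forall x y : S, x = (y + x + y) * x) <-> Q5.
Proof.
  split; intros h x y; rewrite (h x y) at 1; rewrite !dR, mI; reflexivity.
Qed.

End H.

Theorem theorem3p4 (S : Type) (add mul : S -> S -> S)
  (HS : idem_semiring add mul) :
  let P1 := least_dl_congruence add mul (Rmul mul) in
  let P2 := rel_incl (Dadd add) (Rmul mul) /\
            (forall x y : S, add (add x (mul y x)) x = x) in
  let P3 := (forall x y : S, add (add x (mul (mul x y) x)) x = x) /\
            rel_incl (Lmul mul) (Dadd add) /\
            rel_incl (Dadd add) (Rmul mul) in
  let P4 := rel_incl (le_r_mul mul) (le_add add) in
  let P5 := forall x y : S, x = add (add (mul y x) x) (mul y x) in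
  let P6 := forall x y : S, x = mul (add (add y x) y) x in
  (P1 <-> P2) /\ (P1 <-> P3) /\ (P1 <-> P4) /\ (P1 <-> P5) /\ (P1 <-> P6).
Proof.
  cbv zeta.
  pose proof (q1_q5 add mul HS) as e1.
  assert (e2 := conj (q2_q5 add mul HS) (q5_q2 add mul HS)).
  assert (e3 := conj (q3_q5 add mul HS) (q5_q3 add mul HS)).
  assert (e4 := conj (q4_q5 add mul HS) (q5_q4 add mul HS)).
  pose proof (q6_q5 add mul HS) as e6.
  unfold Q5 in *.
  split; [|split; [|split; [|split]]]; tauto.
Qed.
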